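(* Let $a>1$ and consider on $M_h$ with $2h=1$ the reduced oblate integrable system $(\ell_{34},G_{obl})$, where $G_{obl}=a\ell_{12}^2+\ell_{13}^2+\ell_{14}^2$. The critical values of the momentum map $(\ell_{34},G_{obl}):M_h\to\mathbb R^2$ are (the parts lying in the image of the momentum map of) the curves $\mathcal O_1: G_{obl}=(\sqrt a-\sqrt{a-1}\,|\ell_{34}|)^2$, $\mathcal O_2: G_{obl}=1-\ell_{34}^2$, and $\mathcal O_3: G_{obl}=0$.
   Context: $\mathbf L=(\ell_{12},\ell_{13},\ell_{14},\ell_{23},\ell_{24},\ell_{34})\in\mathbb R^6\cong\mathfrak{so}(4)^*$ with the Lie–Poisson bracket of $\mathfrak{so}(4)$ (extending $\ell_{ji}=-\ell_{ij}$: $\{\ell_{ij},\ell_{jk}\}=-\ell_{ik}$ for distinct $i,j,k$, and $\{\ell_{ij},\ell_{kl}\}=0$ when $\{i,j\}\cap\{k,l\}=\emptyset$). $M_h=\{\mathbf L:\sum_{i<j}\ell_{ij}^2=2h,\ \ell_{12}\ell_{34}-\ell_{13}\ell_{24}+\ell_{14}\ell_{23}=0\}\cong S^2\times S^2$ is a symplectic leaf. This system arises from separating the geodesic flow on $S^3$ in oblate coordinates (ellipsoidal parameters $(0,1,a,a)$). *)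

(* Defs.v *)
From Stdlib Require Import Reals.
From Coquelicot Require Import Coquelicot.
Open Scope R_scope.

(* A point L = (l12,l13,l14,l23,l24,l34) of R^6 ~ so(4)^*. *)
Record L6 := mkL { l12 : R; l13 : R; l14 : R; l23 : R; l24 : R; l34 : R }.

Definition shift (L V : L6) (t : R) : L6 :=
  mkL (l12 L + t * l12 V) (l13 L + t * l13 V) (l14 L + t * l14 V)
      (l23 L + t * l23 V) (l24 L + t * l24 V) (l34 L + t * l34 V).

Definition dir (f : L6 -> R) (L V : L6) : R := Derive (fun t => f (shift L V t)) 0.

(* Casimirs of so(4). *)
Definition C1 (L : L6) : R :=
  l12 L ^ 2 + l13 L ^ 2 + l14 L ^ 2 + l23 L ^ 2 + l24 L ^ 2 + l34 L ^ 2.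
Definition C2 (L : L6) : R :=
  l12 L * l34 L - l13 L * l24 L + l14 L * l23 L.

Definition Mh (h : R) (L : L6) : Prop := C1 L = 2 * h /\ C2 L = 0.

Definition G_obl (a : R) (L : L6) : R := a * l12 L ^ 2 + l13 L ^ 2 + l14 L ^ 2.

(* Tangent vectors to the (regular) level set M_h at L: kernel of dC1, dC2. *)
Definition tangent (L V : L6) : Prop := dir C1 L V = 0 /\ dir C2 L V = 0.

(* L is a critical point of the momentum map (l34, G_obl) restricted to M_h:
   the differential restricted to T_L M_h has rank < 2, i.e. some nontrivial
   linear combination of d l34 and d G_obl vanishes on T_L M_h. *)
Definition crit_point (a h : R) (L : L6) : Prop :=
  Mh h L /\
  exists al be : R, (al <> 0 \/ be <> 0) /\
    forall V : L6, tangent L V -> al * dir l34 L V + be * dir (G_obl a) L V = 0.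

Definition crit_value (a h x y : R) : Prop :=
  exists L, crit_point a h L /\ x = l34 L /\ y = G_obl a L.
Definition in_image (a h x y : R) : Prop :=
  exists L, Mh h L /\ x = l34 L /\ y = G_obl a L.

(* Main.v *)
Require Import Defs.
From Stdlib Require Import Reals Lra Psatz.
From Coquelicot Require Import Coquelicot.
Open Scope R_scope.

Definition dotLV (L V : L6) := l12 L * l12 V + l13 L * l13 V + l14 L * l14 V + l23 L * l23 V + l24 L * l24 V + l34 L * l34 V.
Definition sdotLV (L V : L6) := l34 L * l12 V - l24 L * l13 V + l23 L * l14 V + l14 L * l23 V - l13 L * l24 V + l12 L * l34 V.

Lemma dir_C1 L V : dir Defs.C1 L V = 2 * dotLV L V.
Proof. unfold dir. apply is_derive_unique. destruct L, V; unfold Defs.C1, shift, dotLV; simpl.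
auto_derive. all: try easy. ring. Qed.
Lemma dir_C2 L V : dir Defs.C2 L V = sdotLV L V.
Proof. unfold dir. apply is_derive_unique. destruct L, V; unfold Defs.C2, shift, sdotLV; simpl.
auto_derive. all: try easy. ring. Qed.
Lemma dir_l34 L V : dir l34 L V = l34 V.
Proof. unfold dir. apply is_derive_unique. destruct L, V; unfold shift; simpl.
auto_derive. all: try easy. ring. Qed.
Lemma dir_G a L V : dir (G_obl a) L V = 2*a*l12 L * l12 V + 2 * l13 L * l13 V + 2 * l14 L * l14 V.
Proof. unfold dir. apply is_derive_unique. destruct L, V; unfold G_obl, shift; simpl.

auto_derive. all: try easy. ring. Qed.
Lemma crit_intro a L m nu : Mh (1/2) L ->
  (a-m)*l12 L - nu*l34 L = 0 -> (1-m)*l13 L + nu*l24 L = 0 ->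
  (1-m)*l14 L - nu*l23 L = 0 -> m*l23 L + nu*l14 L = 0 ->
  m*l24 L - nu*l13 L = 0 -> crit_point a (1/2) L.
Proof.
intros HM H1 H2 H3 H4 H5. split; [exact HM|].
exists (m*l34 L + nu*l12 L), (1/2). split; [right; lra|].
intros V [T1 T2]. rewrite dir_C1 in T1; rewrite dir_C2 in T2; rewrite dir_l34, dir_G.
assert (E : (m * l34 L + nu * l12 L) * l34 V +
  1 / 2 * (2 * a * l12 L * l12 V + 2 * l13 L * l13 V + 2 * l14 L * l14 V)
  = m * dotLV L V + nu * sdotLV L V + l12 V * ((a-m)*l12 L - nu*l34 L)
    + l13 V * ((1-m)*l13 L + nu*l24 L) + l14 V * ((1-m)*l14 L - nu*l23 L)
    - l23 V * (m*l23 L + nu*l14 L) - l24 V * (m*l24 L - nu*l13 L))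
  by (unfold dotLV, sdotLV; field).
rewrite E, H1, H2, H3, H4, H5, T2. replace (dotLV L V) with 0 by lra. ring.
Qed.

Lemma sq0 x : x^2 = 0 -> x = 0.
Proof. intro H. nra. Qed.
Lemma sq6 x1 x2 x3 x4 x5 x6 : x1^2+x2^2+x3^2+x4^2+x5^2+x6^2 = 0 ->
  x1 = 0 /\ x2 = 0 /\ x3 = 0 /\ x4 = 0 /\ x5 = 0 /\ x6 = 0.
Proof. intro H. pose proof (pow2_ge_0 x1). pose proof (pow2_ge_0 x2). pose proof (pow2_ge_0 x3).
pose proof (pow2_ge_0 x4). pose proof (pow2_ge_0 x5). pose proof (pow2_ge_0 x6).
repeat split; apply sq0; lra. Qed.

Lemma crit_eqs a L al be : Mh (1/2) L ->
  (forall V, tangent L V -> al*dir l34 L V + be*dir (G_obl a) L V = 0) ->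
  exists c d,
   2*a*be*l12 L - c*l12 L - d*l34 L = 0 /\
   2*be*l13 L - c*l13 L + d*l24 L = 0 /\
   2*be*l14 L - c*l14 L - d*l23 L = 0 /\
   - c*l23 L - d*l14 L = 0 /\
   - c*l24 L + d*l13 L = 0 /\
   al - c*l34 L - d*l12 L = 0.
Proof.
intros [HC1 HC2] H. destruct L as [p q r s t u]. unfold Defs.C1, Defs.C2 in *; simpl in *.
set (c := p*(2*a*be*p) + q*(2*be*q) + r*(2*be*r) + u*al).
set (d := u*(2*a*be*p) - t*(2*be*q) + s*(2*be*r) + p*al).
set (V := mkL (2*a*be*p - c*p - d*u) (2*be*q - c*q + d*t) (2*be*r - c*r - d*s)
              (- c*s - d*r) (- c*t + d*q) (al - c*u - d*p)).
assert (HT : tangent (mkL p q r s t u) V).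
{ unfold tangent. rewrite dir_C1, dir_C2. unfold dotLV, sdotLV, V; simpl.
  unfold c, d. split.
  - replace 0 with (2*((2*a*be*p*p + 2*be*q*q + 2*be*r*r + al*u)*(1 - (p ^ 2 + q ^ 2 + r ^ 2 + s ^ 2 + t ^ 2 + u ^ 2))
      - (u*(2*a*be*p) - t*(2*be*q) + s*(2*be*r) + p*al)*2*(p * u - q * t + r * s))) by (rewrite HC2; replace (p ^ 2 + q ^ 2 + r ^ 2 + s ^ 2 + t ^ 2 + u ^ 2) with 1 by lra; ring).
    ring.
  - replace 0 with (- (2*a*be*p*p + 2*be*q*q + 2*be*r*r + al*u)*2*(p * u - q * t + r * s) + 
       (u*(2*a*be*p) - t*(2*be*q) + s*(2*be*r) + p*al)*(1 - (p ^ 2 + q ^ 2 + r ^ 2 + s ^ 2 + t ^ 2 + u ^ 2))) by (rewrite HC2; replace (p ^ 2 + q ^ 2 + r ^ 2 + s ^ 2 + t ^ 2 + u ^ 2) with 1 by lra; ring).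
    ring. }
specialize (H V HT). rewrite dir_l34, dir_G in H. unfold V in H; simpl in H.
assert (HS : (2*a*be*p - c*p - d*u)^2 + (2*be*q - c*q + d*t)^2 + (2*be*r - c*r - d*s)^2
   + (- c*s - d*r)^2 + (- c*t + d*q)^2 + (al - c*u - d*p)^2 = 0).
{ destruct HT as [T1 T2]. rewrite dir_C1 in T1; rewrite dir_C2 in T2.
  unfold dotLV, sdotLV, V in T1, T2; simpl in T1, T2.
  rewrite <- H. 
  transitivity ((al * (al - c * u - d * p) + be * (2 * a * p * (2 * a * be * p - c * p - d * u) +
     2 * q * (2 * be * q - c * q + d * t) + 2 * r * (2 * be * r - c * r - d * s)))
     - c * (p * (2 * a * be * p - c * p - d * u) + q * (2 * be * q - c * q + d * t) +
       r * (2 * be * r - c * r - d * s) + s * (- c * s - d * r) + t * (- c * t + d * q) +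
       u * (al - c * u - d * p))
     - d * (u * (2 * a * be * p - c * p - d * u) - t * (2 * be * q - c * q + d * t) +
       s * (2 * be * r - c * r - d * s) + r * (- c * s - d * r) - q * (- c * t + d * q) +
       p * (al - c * u - d * p))).
  - ring.
  - rewrite T2. clearbody V c d. clear H HC1 HC2. match goal with T1 : 2 * ?Y = 0 |- _ => replace Y with 0 by (symmetry; lra) end. ring. }
exists c, d; simpl. clearbody V c d.
destruct (sq6 _ _ _ _ _ _ HS) as (?&?&?&?&?&?). lra.
Qed.

Definition Target a x y := y = (sqrt a - sqrt (a - 1) * Rabs x) ^ 2 \/ y = 1 - x ^ 2 \/ y = 0.

Lemma sqrt_facts a : 1 < a -> sqrt a ^ 2 = a /\ sqrt (a-1) ^ 2 = a - 1 /\ 0 <= sqrt a /\ 0 <= sqrt (a-1).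
Proof. intro. repeat split; try apply pow2_sqrt; try apply sqrt_pos; lra. Qed.

Lemma f1_m a m x : 1 < a -> 0 <= a - m -> (a-m)^2 = a*(a-1)*x^2 ->
  a * (sqrt a - sqrt (a - 1) * Rabs x) ^ 2 = m^2.
Proof.
intros ha hm H. destruct (sqrt_facts a ha) as (H1&H2&H3&H4).
pose proof (Rabs_pos x) as H5. pose proof (pow2_abs x) as H6.
set (sa := sqrt a) in *. set (sb := sqrt (a-1)) in *. set (ax := Rabs x) in *.
assert (Hk2 : (sa*sb*ax)^2 = a*(a-1)*x^2).
{ replace ((sa*sb*ax)^2) with (sa^2*sb^2*ax^2) by ring. rewrite H1, H2, H6. ring. }
assert (Hk0 : 0 <= sa*sb*ax) by (apply Rmult_le_pos; [apply Rmult_le_pos|]; lra).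
assert (Hk : sa*sb*ax = a - m) by nra.
replace (a * (sa - sb*ax)^2) with (sa^2*sa^2 - 2*sa^2*(sa*sb*ax) + sa^2*(sb^2*ax^2)) by (rewrite <- H1; ring).
rewrite Hk, H1, H2, H6. nra.
Qed.

Lemma diag_finish a p q r s t u : 1 < a -> q = 0 -> r = 0 -> s = 0 -> t = 0 ->
  p^2+q^2+r^2+s^2+t^2+u^2 = 1 -> p*u - q*t + r*s = 0 ->
  Target a u (a*p^2+q^2+r^2).
Proof.
intros ha -> -> -> -> C1 C2. destruct (Rmult_integral _ _ (eq_ind _ (fun z => z = 0) C2 _ (ltac:(ring) : p*u - 0*0 + 0*0 = p*u))) as [->| ->].
- right; right. ring.
- left. rewrite Rabs_R0. destruct (sqrt_facts a ha) as (H1&_). 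
  replace ((sqrt a - sqrt (a - 1) * 0) ^ 2) with (sqrt a ^ 2) by ring. rewrite H1. nra.
Qed.

Lemma core0 a c d al p q r s t u : 1 < a -> al <> 0 ->
  - c*p - d*u = 0 -> - c*q + d*t = 0 -> - c*r - d*s = 0 -> - c*s - d*r = 0 ->
  - c*t + d*q = 0 -> al - c*u - d*p = 0 ->
  p^2+q^2+r^2+s^2+t^2+u^2 = 1 -> p*u - q*t + r*s = 0 ->
  Target a u (a*p^2+q^2+r^2).
Proof.
intros ha hal E1 E2 E3 E4 E5 E6 C1 C2.
destruct (Req_dec (c^2 - d^2) 0) as [HD|HD].
- exfalso.
  assert (X1 : c*al - (c^2-d^2)*u = c*(al - c*u - d*p) - d*(- c*p - d*u)) by ring.
  assert (X2 : d*al - (d^2-c^2)*p = d*(al - c*u - d*p) - c*(- c*p - d*u)) by ring.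
  rewrite E6, E1 in X1, X2.
  rewrite HD, Rmult_0_l, Rminus_0_r in X1. replace (d^2-c^2) with 0 in X2 by lra.
  rewrite Rmult_0_l, Rminus_0_r in X2.
  assert (Y1 : c*al = 0) by (rewrite X1; ring). assert (Y2 : d*al = 0) by (rewrite X2; ring).
  destruct (Rmult_integral c al Y1) as [Hc|]; [|contradiction].
  destruct (Rmult_integral d al Y2) as [Hd|]; [|contradiction].
  subst. apply hal. lra.
- assert (Hq : (c^2-d^2)*q = -c*(- c*q + d*t) - d*(- c*t + d*q)) by ring.
  assert (Ht : (c^2-d^2)*t = -c*(- c*t + d*q) - d*(- c*q + d*t)) by ring.
  assert (Hr : (c^2-d^2)*r = -c*(- c*r - d*s) + d*(- c*s - d*r)) by ring.
  assert (Hs : (c^2-d^2)*s = -c*(- c*s - d*r) + d*(- c*r - d*s)) by ring.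
  rewrite E2, E5 in Hq, Ht. rewrite E3, E4 in Hr, Hs.
  replace (-c*0 - d*0) with 0 in Hq, Ht by ring. replace (-c*0 + d*0) with 0 in Hr, Hs by ring.
  apply diag_finish with (s := s) (t := t); auto;
  [destruct (Rmult_integral _ _ Hq) | destruct (Rmult_integral _ _ Hr) |
   destruct (Rmult_integral _ _ Hs) | destruct (Rmult_integral _ _ Ht)]; lra.
Qed.

Lemma pow2_gt_0 x : x <> 0 -> x^2 > 0.
Proof. intro H. destruct (Rtotal_order x 0) as [h|[h|h]]; [nra|contradiction|nra]. Qed.

Lemma core a m nu p q r s t u : 1 < a ->
  (a-m)*p - nu*u = 0 -> (1-m)*q + nu*t = 0 -> (1-m)*r - nu*s = 0 ->
  m*s + nu*r = 0 -> m*t - nu*q = 0 ->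
  p^2+q^2+r^2+s^2+t^2+u^2 = 1 -> p*u - q*t + r*s = 0 ->
  Target a u (a*p^2+q^2+r^2).
Proof.
intros ha E1 E2 E3 E4 E5 C1 C2.
destruct (Req_dec (m*(1-m) + nu^2) 0) as [HD|HD].
2:{
  assert (Hq : (m*(1-m) + nu^2)*q = m*((1-m)*q + nu*t) - nu*(m*t - nu*q)) by ring.
  assert (Ht : (m*(1-m) + nu^2)*t = (1-m)*(m*t - nu*q) + nu*((1-m)*q + nu*t)) by ring.
  assert (Hr : (m*(1-m) + nu^2)*r = m*((1-m)*r - nu*s) + nu*(m*s + nu*r)) by ring.
  assert (Hs : (m*(1-m) + nu^2)*s = (1-m)*(m*s + nu*r) - nu*((1-m)*r - nu*s)) by ring.
  rewrite E2, E5 in Hq, Ht. rewrite E3, E4 in Hr, Hs.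
  replace (m*0 - nu*0) with 0 in Hq by ring. replace ((1-m)*0 + nu*0) with 0 in Ht by ring.
  replace (m*0 + nu*0) with 0 in Hr by ring. replace ((1-m)*0 - nu*0) with 0 in Hs by ring.
  apply diag_finish with (s := s) (t := t); auto;
  [destruct (Rmult_integral _ _ Hq) | destruct (Rmult_integral _ _ Hr) |
   destruct (Rmult_integral _ _ Hs) | destruct (Rmult_integral _ _ Ht)]; lra. }
destruct (Req_dec nu 0) as [Hn|Hn].
{ subst nu. assert (Hm : m*(1-m) = 0) by (rewrite <- HD; ring).
  destruct (Rmult_integral _ _ Hm) as [->|Hm1].
  - assert (q = 0) by lra. assert (r = 0) by lra.
    assert (Hap : a*p = 0) by (rewrite <- E1; ring).
    destruct (Rmult_integral _ _ Hap); [lra|]. subst. right; right; ring.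
  - assert (m = 1) by lra. subst m. assert (s = 0) by lra. assert (t = 0) by lra.
    assert (Hap : (a-1)*p = 0) by (rewrite <- E1; ring).
    destruct (Rmult_integral _ _ Hap); [lra|]. subst. right; left. lra. }
assert (Hnu : nu^2 = m*(m-1)) by lra.
assert (Hpos : m*(m-1) > 0) by (rewrite <- Hnu; apply pow2_gt_0; auto).
assert (Hm0 : m <> 0) by (intro; subst; lra).
assert (HA : m*p*u = nu*(q^2+r^2)).
{ assert (X : m*p*u - nu*(q^2+r^2) = m*(p*u - q*t + r*s) + q*(m*t - nu*q) - r*(m*s + nu*r)) by ring.
  rewrite C2, E4, E5 in X. lra. }
assert (HB : (a-m)*p^2 = (m-1)*(q^2+r^2)).
{ assert (X : m*((a-m)*p^2 - (m-1)*(q^2+r^2)) = p*m*((a-m)*p - nu*u) + nu*(m*p*u - nu*(q^2+r^2)) + (q^2+r^2)*(nu^2 - m*(m-1))) by ring.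
  rewrite E1, HA, Hnu in X. replace (p*m*0 + nu*(nu*(q^2+r^2) - nu*(q^2+r^2)) + (q^2+r^2)*(m*(m-1) - m*(m-1))) with 0 in X by ring.
  destruct (Rmult_integral _ _ X); [contradiction | lra]. }
assert (Hms : m*s = -nu*r) by lra. assert (Hmt : m*t = nu*q) by lra.
assert (HS : m*(s^2+t^2) = (a-m)*p^2).
{ apply Rmult_eq_reg_l with m; auto.
  replace (m*(m*(s^2+t^2))) with ((m*s)^2 + (m*t)^2) by ring. rewrite Hms, Hmt.
  replace ((-nu*r)^2 + (nu*q)^2) with (nu^2*(q^2+r^2)) by ring. rewrite Hnu, HB. ring. }
assert (Hnu_u : nu*u = (a-m)*p) by lra.
assert (HU : u^2*(m*(m-1)) = (a-m)^2*p^2).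
{ rewrite <- Hnu. replace (u^2*nu^2) with ((nu*u)^2) by ring. rewrite Hnu_u. ring. }
assert (HP : p <> 0).
{ intro Hp. subst p. 
  assert (u = 0). { assert (nu*u = 0) by lra. destruct (Rmult_integral _ _ H); [contradiction|auto]. }
  assert (HQ : (m-1)*(q^2+r^2) = 0) by lra.
  destruct (Rmult_integral _ _ HQ) as [|HQ']. { subst. nra. }
  assert (HS' : m*(s^2+t^2) = 0) by lra.
  destruct (Rmult_integral _ _ HS') as [|HS'']; [contradiction|].
  subst u. lra. }
assert (HP2 : p^2 > 0) by (apply pow2_gt_0; auto).
assert (HQ0 : 0 <= q^2+r^2) by nra.
assert (Hm1 : m > 1).
{ destruct (Rlt_or_le 1 m) as [|Hle]; auto. exfalso.
  assert (m < 0) by nra. nra. }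
assert (Hma : m <= a).
{ destruct (Rle_or_lt m a) as [|Hlt]; auto. exfalso. nra. }
assert (Hc : p^2*(a*(a-1)) = m*(m-1)).
{ assert (e1 : m*(m-1)*(q^2+r^2) = m*((a-m)*p^2)) by (replace (m*(m-1)*(q^2+r^2)) with (m*((m-1)*(q^2+r^2))) by ring; rewrite <- HB; ring).
  assert (e2 : m*(m-1)*(s^2+t^2) = (m-1)*((a-m)*p^2)) by (replace (m*(m-1)*(s^2+t^2)) with ((m-1)*(m*(s^2+t^2))) by ring; rewrite HS; ring).
  assert (e3 : m*(m-1)*u^2 = (a-m)^2*p^2) by (replace (m*(m-1)*u^2) with (u^2*(m*(m-1))) by ring; rewrite HU; ring).
  assert (e4 : m*(m-1)*(p^2+q^2+r^2+s^2+t^2+u^2) = m*(m-1)) by (rewrite C1; ring).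
  nra. }
assert (HG : a*(a*p^2+q^2+r^2) = m^2).
{ apply Rmult_eq_reg_l with (m-1); [|lra].
  assert (e1 : (m-1)*(a*p^2+q^2+r^2) = a*(m-1)*p^2 + (a-m)*p^2) by (rewrite HB; ring).
  replace ((m-1)*(a*(a*p^2+q^2+r^2))) with (a*((m-1)*(a*p^2+q^2+r^2))) by ring.
  rewrite e1. replace (a * (a * (m - 1) * p ^ 2 + (a - m) * p ^ 2)) with (m*(p^2*(a*(a-1)))) by ring.
  rewrite Hc. ring. }
assert (HX : (a-m)^2 = a*(a-1)*u^2).
{ apply Rmult_eq_reg_l with (m*(m-1)); [|lra].
  replace (m*(m-1)*(a*(a-1)*u^2)) with ((a*(a-1))*(u^2*(m*(m-1)))) by ring.
  rewrite HU. rewrite <- Hc. ring. }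
left. pose proof (f1_m a m u ha ltac:(lra) HX) as HF.
apply Rmult_eq_reg_l with a; [|lra]. rewrite HF, HG. reflexivity.
Qed.

Lemma O2_crit a x : 1 < a -> x^2 <= 1 -> crit_value a (1/2) x (1 - x^2).
Proof.
intros ha hx. exists (mkL 0 (sqrt (1-x^2)) 0 0 0 x). split; [|split].
- apply crit_intro with (m := 1) (nu := 0); cbn [l12 l13 l14 l23 l24 l34]; try ring.
  split; unfold Defs.C1, Defs.C2; cbn [l12 l13 l14 l23 l24 l34]; [rewrite pow2_sqrt by lra; lra | ring].
- reflexivity.
- unfold G_obl; cbn [l12 l13 l14 l23 l24 l34]. rewrite pow2_sqrt by lra. ring.
Qed.

Lemma bound a L : 1 < a -> Mh (1/2) L -> a*l34 L^2 >= a-1 -> G_obl a L <= 1 - l34 L^2.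
Proof.
destruct L as [p q r s t u]; unfold Mh, Defs.C1, Defs.C2, G_obl; cbn [l12 l13 l14 l23 l24 l34]. intros ha [C1 C2] hX.
assert (HCS : p^2*u^2 <= (q^2+r^2)*(s^2+t^2)).
{ replace (p^2*u^2) with ((q*t - r*s)^2) by (replace (q*t - r*s) with (p*u) by lra; ring).
  assert (0 <= (q*s + r*t)^2) by apply pow2_ge_0.
  replace ((q^2+r^2)*(s^2+t^2)) with ((q*t - r*s)^2 + (q*s+r*t)^2) by ring. lra. }
destruct (Rle_or_lt (a*p^2+q^2+r^2) (1-u^2)) as [|Hgt]; auto. exfalso.
assert (HP : (a-1)*p^2 > s^2+t^2) by lra.
assert (HS0 : 0 <= s^2+t^2) by nra.
assert (HQ0 : 0 <= q^2+r^2) by nra.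
assert (HP0 : p^2 > 0) by nra.
assert (H1 : (q^2+r^2)*(s^2+t^2) <= (q^2+r^2)*((a-1)*p^2)) by (apply Rmult_le_compat_l; lra).
assert (H2 : u^2 <= (a-1)*(q^2+r^2)).
{ apply Rmult_le_reg_l with (p^2); auto. nra. }
assert (H3 : q^2+r^2 < 1 - u^2) by lra.
nra.
Qed.

Lemma f1_ge a x : 1 < a -> 1 - x^2 <= (sqrt a - sqrt (a - 1) * Rabs x) ^ 2.
Proof.
intros ha. destruct (sqrt_facts a ha) as (H1&H2&H3&H4).
pose proof (pow2_abs x) as H6.
set (sa := sqrt a) in *. set (sb := sqrt (a-1)) in *. set (ax := Rabs x) in *.
assert (E : (sa - sb*ax)^2 - (1 - x^2) = (sa*ax - sb)^2).
{ replace ((sa - sb*ax)^2 - (1 - x^2)) with (sa^2 - 2*sa*sb*ax + sb^2*ax^2 - 1 + ax^2) by (rewrite <- H6; ring).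
  replace ((sa*ax - sb)^2) with (sa^2*ax^2 - 2*sa*sb*ax + sb^2) by ring.
  rewrite H1, H2. ring. }
pose proof (pow2_ge_0 (sa*ax - sb)). lra.
Qed.

Lemma O1_crit a x : 1 < a -> a*x^2 < a-1 ->
  crit_value a (1/2) x ((sqrt a - sqrt (a - 1) * Rabs x) ^ 2).
Proof.
intros ha hx. destruct (sqrt_facts a ha) as (H1&H2&H3&H4).
pose proof (pow2_abs x) as H6. pose proof (Rabs_pos x) as H7.
set (k := sqrt a * sqrt (a-1)).
assert (Hk2 : k^2 = a*(a-1)) by (unfold k; replace ((sqrt a * sqrt (a-1))^2) with (sqrt a^2 * sqrt (a-1)^2) by ring; rewrite H1, H2; ring).
assert (Hk0 : 0 <= k) by (unfold k; apply Rmult_le_pos; lra).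
set (m := a - k * Rabs x).
assert (HX : (a-m)^2 = a*(a-1)*x^2).
{ unfold m. replace ((a - (a - k * Rabs x))^2) with (k^2 * Rabs x ^2) by ring. rewrite Hk2, H6. ring. }
assert (Hkx0 : 0 <= k * Rabs x) by (apply Rmult_le_pos; lra).
assert (Hm1 : m > 1).
{ unfold m. assert ((k*Rabs x)^2 < (a-1)^2).
  { replace ((k*Rabs x)^2) with (k^2*Rabs x^2) by ring. rewrite Hk2, H6. nra. }
  nra. }
assert (Hma : m <= a) by (unfold m; lra).
clearbody m.
set (w := sqrt (m*(m-1))).
assert (Hw2 : w^2 = m*(m-1)) by (apply pow2_sqrt; nra).
assert (Hw0 : 0 <= w) by apply sqrt_pos.
clearbody w.
set (nu := if Rle_dec 0 x then w else - w).
assert (Hnu2 : nu^2 = m*(m-1)) by (unfold nu; destruct (Rle_dec 0 x); [|replace ((-w)^2) with (w^2) by ring]; auto).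
assert (Hnux : 0 <= nu*x) by (unfold nu; destruct (Rle_dec 0 x); nra).
clearbody nu.
set (p0 := m*(m-1)/(a*(a-1))).
assert (Hp0 : 0 <= p0) by (unfold p0; apply Rmult_le_pos; [nra | left; apply Rinv_0_lt_compat; nra]).
set (sp := sqrt p0).
assert (Hsp : sp^2 = p0) by (apply pow2_sqrt; auto).
assert (Hsp0 : 0 <= sp) by apply sqrt_pos.
clearbody sp.
set (S0 := (a-m)/(m*a*(a-1))).
assert (HS0 : 0 <= S0) by (unfold S0; apply Rmult_le_pos; [lra | left; apply Rinv_0_lt_compat; 
   apply Rmult_lt_0_compat; [apply Rmult_lt_0_compat|]; lra]).
set (ss := sqrt S0).
assert (Hss : ss^2 = S0) by (apply pow2_sqrt; auto).
clearbody ss.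
assert (Hx2 : x^2 = (a-m)^2/(a*(a-1))) by (rewrite HX; field; lra).
assert (HE1 : nu*x = (a-m)*sp).
{ assert (0 <= (a-m)*sp) by (apply Rmult_le_pos; lra).
  assert (((a-m)*sp)^2 = (nu*x)^2).
  { replace (((a-m)*sp)^2) with ((a-m)^2*sp^2) by ring. replace ((nu*x)^2) with (nu^2*x^2) by ring.
    rewrite Hsp, Hnu2, Hx2. unfold p0. field. lra. }
  nra. }
assert (Hnu0 : nu <> 0) by (intro; subst; nra).
exists (mkL sp (m*ss) 0 0 (nu*ss) x). split; [|split].
- apply crit_intro with (m := m) (nu := nu); cbn [l12 l13 l14 l23 l24 l34].
  + split; unfold Defs.C1, Defs.C2; cbn [l12 l13 l14 l23 l24 l34].
    * replace (sp ^ 2 + (m * ss) ^ 2 + 0 ^ 2 + 0 ^ 2 + (nu * ss) ^ 2 + x ^ 2) with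
        (sp^2 + (m^2 + nu^2)*ss^2 + x^2) by ring.
      rewrite Hsp, Hss, Hnu2, Hx2. unfold p0, S0. field. lra.
    * apply Rmult_eq_reg_l with nu; auto.
      replace (nu * (sp * x - m * ss * (nu * ss) + 0 * 0)) with (sp*(nu*x) - m*nu^2*ss^2) by ring.
      rewrite HE1. replace (sp*((a-m)*sp)) with ((a-m)*sp^2) by ring.
      rewrite Hsp, Hnu2, Hss. unfold p0, S0. field. lra.
  + rewrite HE1. ring.
  + replace ((1 - m) * (m * ss) + nu * (nu * ss)) with (ss*((1-m)*m + nu^2)) by ring.
    rewrite Hnu2. ring.
  + ring.
  + ring.
  + ring.
- reflexivity.
- unfold G_obl; cbn [l12 l13 l14 l23 l24 l34]. apply Rmult_eq_reg_l with a; [|lra].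
  rewrite (f1_m a m x ha ltac:(lra) HX).
  replace (a * (a * sp ^ 2 + (m * ss) ^ 2 + 0 ^ 2)) with (a*a*sp^2 + a*m^2*ss^2) by ring.
  rewrite Hsp, Hss. unfold p0, S0. field. lra.
Qed.

Theorem proposition5 (a : R) (ha : 1 < a) (x y : R) :
  crit_value a (1/2) x y <->
  (in_image a (1/2) x y /\
   (y = (sqrt a - sqrt (a - 1) * Rabs x) ^ 2 \/ y = 1 - x ^ 2 \/ y = 0)).
Proof.
split.
- intros [L [HL [-> ->]]]. split; [exists L; split; [exact (proj1 HL)| auto]|].
  destruct HL as [HM [al [be [Hne H]]]].
  destruct (crit_eqs _ _ _ _ HM H) as [c [d (E1&E2&E3&E4&E5&E6)]].
  destruct L as [p q r s t u]; cbn [l12 l13 l14 l23 l24 l34] in *.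
  destruct HM as [C1 C2]; unfold Defs.C1, Defs.C2 in *; cbn [l12 l13 l14 l23 l24 l34] in *.
  unfold G_obl; cbn [l12 l13 l14 l23 l24 l34]. change (Target a u (a*p^2+q^2+r^2)).
  assert (C1' : p^2+q^2+r^2+s^2+t^2+u^2 = 1) by lra.
  destruct (Req_dec be 0) as [Hb|Hb].
  + subst be. assert (al <> 0) by (destruct Hne; lra).
    apply core0 with c d al s t; auto; lra.
  + apply core with (c/(2*be)) (d/(2*be)) s t; auto.
    * assert (X : (a - c/(2*be))*p - d/(2*be)*u = (2*a*be*p - c*p - d*u)/(2*be)) by (field; auto).
      rewrite X, E1. unfold Rdiv; ring.
    * assert (X : (1 - c/(2*be))*q + d/(2*be)*t = (2*be*q - c*q + d*t)/(2*be)) by (field; auto).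
      rewrite X, E2. unfold Rdiv; ring.
    * assert (X : (1 - c/(2*be))*r - d/(2*be)*s = (2*be*r - c*r - d*s)/(2*be)) by (field; auto).
      rewrite X, E3. unfold Rdiv; ring.
    * assert (X : c/(2*be)*s + d/(2*be)*r = - (- c*s - d*r)/(2*be)) by (field; auto).
      rewrite X, E4. unfold Rdiv; ring.
    * assert (X : c/(2*be)*t - d/(2*be)*q = - (- c*t + d*q)/(2*be)) by (field; auto).
      rewrite X, E5. unfold Rdiv; ring.
- intros [[L0 [HM [-> ->]]] Hc].
  assert (HB := bound a L0 ha HM).
  destruct L0 as [p q r s t u]; cbn [l12 l13 l14 l23 l24 l34] in *.
  destruct HM as [C1 C2]; unfold Defs.C1, Defs.C2 in *; cbn [l12 l13 l14 l23 l24 l34] in *.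
  unfold G_obl in *; cbn [l12 l13 l14 l23 l24 l34] in *.
  assert (C1' : p^2+q^2+r^2+s^2+t^2+u^2 = 1) by lra.
  assert (Hu : u^2 <= 1) by nra.
  destruct Hc as [H1|[H2|H3]].
  + destruct (Rlt_or_le (a*u^2) (a-1)) as [Hlt|Hge].
    * rewrite H1. apply O1_crit; auto.
    * assert (HG : a * p ^ 2 + q ^ 2 + r ^ 2 = 1 - u^2).
      { pose proof (HB (Rle_ge _ _ Hge)). pose proof (f1_ge a u ha). lra. }
      rewrite HG. apply O2_crit; auto.
  + rewrite H2. apply O2_crit; auto.
  + assert (p = 0) by nra. assert (q = 0) by nra. assert (r = 0) by nra.
    exists (mkL p q r s t u). split; [|cbn [l12 l13 l14 l23 l24 l34]; split; auto].
    apply crit_intro with (m := 0) (nu := 0); cbn [l12 l13 l14 l23 l24 l34].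
    * split; unfold Defs.C1, Defs.C2; cbn [l12 l13 l14 l23 l24 l34]; lra.
    * subst; ring.
    * subst; ring.
    * subst; ring.
    * ring.
    * ring.
Qed.
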